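(* Let $G$ be a graph with $\mathrm{pw}(G)=3$, and let $C^1,\ldots,C^c$ be pairwise vertex-disjoint chunk graphs, each a union of connected components of $G$, with $G=C^1\cup\cdots\cup C^c$. For each $i$ let $\mathcal{Q}_i$ be a path decomposition of $C^i$ of width at most $3$, and let $a$ and $b$ be the numbers of path decompositions among $\mathcal{Q}_1,\ldots,\mathcal{Q}_c$ of Type A and of Type B, respectively. Then $$\min_{\pi,\ \mathbf{f}\in\{0,1\}^c}\mathrm{length}\bigl(\mathcal{Q}^{f_1}_{\pi(1)}\oplus\cdots\oplus\mathcal{Q}^{f_c}_{\pi(c)}\bigr)=\sum_{i=1}^c\mathrm{length}(\mathcal{Q}_i)-\mu(a,b),$$ where the minimum is over all permutations $\pi$ of $\{1,\ldots,c\}$ and vectors $\mathbf{f}=(f_1,\ldots,f_c)\in\{0,1\}^c$, $\mathcal{Q}_i^0=\mathcal{Q}_i$, $\mathcal{Q}_i^1$ is the reverse of $\mathcal{Q}_i$, and $\mu(a,b)=\max(0,a-1)$ if $b=0$ and $\mu(a,b)=a+\lfloor b/2\rfloor$ if $b>0$.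
   Context: A path decomposition of $G$ is a sequence $(X_1,\ldots,X_l)$ of subsets of $V(G)$ covering $V(G)$, such that every edge lies in some $X_i$, and $X_i\cap X_k\subseteq X_j$ whenever $i\leq j\leq k$; width is $\max_i|X_i|-1$, length is $l$; $\mathrm{pw}(G)$ is the minimum width. A component is big if it has at least $3$ vertices; a chunk graph has exactly one big component. A path decomposition $(X_1,\ldots,X_l)$ of a chunk graph is of Type A if $|X_1|\leq 2$ and $|X_l|\leq 2$; Type B if exactly one of $|X_1|\leq 2$, $|X_l|\leq 2$ holds; (Type C if $|X_1|>2$ and $|X_l|>2$). The reverse of $(X_1,\ldots,X_l)$ is $(X_l,\ldots,X_1)$. For path decompositions $\mathcal{P}_1=(X^1_1,\ldots,X^1_{l_1})$, $\mathcal{P}_2=(X^2_1,\ldots,X^2_{l_2})$ of vertex-disjoint graphs, $\mathcal{P}_1\oplus\mathcal{P}_2=(X^1_1,\ldots,X^1_{l_1-1},X^1_{l_1}\cup X^2_1,X^2_2,\ldots,X^2_{l_2})$ if $|X^1_{l_1}|\leq 2$ and $|X^2_1|\leq 2$, and $(X^1_1,\ldots,X^1_{l_1},X^2_1,\ldots,X^2_{l_2})$ otherwise; multiple concatenations are evaluated left to right: $\mathcal{P}_1\oplus\cdots\oplus\mathcal{P}_c=(\cdots((\mathcal{P}_1\oplus\mathcal{P}_2)\oplus\mathcal{P}_3)\cdots)\oplus\mathcal{P}_c$. *)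

(* Defs.v *)
From mathcomp Require Import all_boot all_order all_fingroup.
Set Implicit Arguments. Unset Strict Implicit. Unset Printing Implicit Defensive.

Section Defs.
Variable T : finType.

Definition simple_graph (e : rel T) := symmetric e /\ irreflexive e.

Definition is_path_decomp (e : rel T) (V : {set T}) (P : seq {set T}) : Prop :=
  [/\ (forall X, X \in P -> X \subset V),
      (forall x, x \in V -> exists2 X, X \in P & x \in X),
      (forall x y, x \in V -> y \in V -> e x y ->
          exists2 X, X \in P & (x \in X) && (y \in X)) &
      (forall i j k, i <= j -> j <= k -> k < size P ->
          nth set0 P i :&: nth set0 P k \subset nth set0 P j)].

(* width = max bag size - 1 ; length = size P *)
Definition pd_width (P : seq {set T}) : nat := (\max_(X <- P) #|X|).-1.

Definition pathwidth_eq (e : rel T) (V : {set T}) (k : nat) : Prop :=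
  (exists P, is_path_decomp e V P /\ pd_width P = k) /\
  (forall P, is_path_decomp e V P -> k <= pd_width P).

Definition induced_rel (e : rel T) (V : {set T}) : rel T :=
  [rel x y | [&& e x y, x \in V & y \in V]].

Definition component (e : rel T) (V : {set T}) (x : T) : {set T} :=
  [set y in V | connect (induced_rel e V) x y].

Definition big_component (e : rel T) (V : {set T}) (x : T) : bool :=
  (x \in V) && (3 <= #|component e V x|).

Definition chunk_graph (e : rel T) (V : {set T}) : Prop :=
  exists x, big_component e V x /\
    forall y, big_component e V y -> component e V y = component e V x.

(* V is a union of connected components of G: closed under adjacency *)
Definition union_of_components (e : rel T) (V : {set T}) : Prop :=
  forall x y, x \in V -> e x y -> y \in V.

Definition first_bag (P : seq {set T}) := head set0 P.
Definition last_bag (P : seq {set T}) := last set0 P.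

Definition typeA (P : seq {set T}) : bool :=
  (#|first_bag P| <= 2) && (#|last_bag P| <= 2).
Definition typeB (P : seq {set T}) : bool :=
  (#|first_bag P| <= 2) (+) (#|last_bag P| <= 2).

Definition pconcat (P1 P2 : seq {set T}) : seq {set T} :=
  match P1, P2 with
  | x :: s1, y :: s2 =>
      if (#|last x s1| <= 2) && (#|y| <= 2)
      then belast x s1 ++ (last x s1 :|: y) :: s2
      else P1 ++ P2
  | _, _ => P1 ++ P2
  end.

Definition pconcat_all (Ps : seq (seq {set T})) : seq {set T} :=
  match Ps with
  | [::] => [::]
  | P :: Ps' => foldl pconcat P Ps'
  end.

Definition orient (f : bool) (P : seq {set T}) : seq {set T} :=
  if f then rev P else P.

End Defs.

Definition mu (a b : nat) : nat := if b == 0 then a.-1 else a + b./2.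

(* Main.v *)
Require Import Defs.
From mathcomp Require Import all_boot all_order all_fingroup.
From mathcomp Require Import zify.
Set Implicit Arguments. Unset Strict Implicit. Unset Printing Implicit Defensive.
Lemma count_card (n : nat) (p : pred 'I_n) :
  count p (enum 'I_n) = #|[set i | p i]|.
Proof.
rewrite -sum1dep_card big_mkcond /= -big_enum /= -sumn_count sumnE big_map.
by apply: eq_bigr => i _; case: (p i).
Qed.

Fixpoint mrg (s : seq (bool * bool)) : nat :=
  match s with
  | [::] => 0
  | x :: s' => (x.2 && (head (false, false) s').1) + mrg s'
  end.

Definition cA (s : seq (bool*bool)) := count (fun p => p.1 && p.2) s.
Definition cB (s : seq (bool*bool)) := count (fun p => p.1 (+) p.2) s.

Lemma up1 s : 2 * mrg s + (head (false,false) s).1 <= 2 * cA s + cB s.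
Proof.
elim: s => [|x s IH] //=; rewrite /cA /cB /= in IH *.
move: IH; case: x => [[] []] /=; case: (head (false,false) s).1 => /=; lia.
Qed.

Lemma up2 s : cB s = 0 -> mrg s <= (cA s).-1.
Proof.
elim: s => [|x s IH] //=; rewrite /cA /cB /= in IH *.
case: x => [[] []] //= H; move: (IH H).
- case: s IH H => [|y s] //= _; case: y => [[] []] /=; lia.

Qed.

Lemma upper s : mrg s <= (if cB s == 0 then (cA s).-1 else cA s + (cB s)./2).
Proof.
case: eqP => [/up2 //|_].
have := up1 s; have := odd_double_half (cB s); rewrite -muln2.
case: (odd (cB s)) => /=; lia.
Qed.

Lemma mrg_cat s1 s2 : mrg (s1 ++ s2) =
  mrg s1 + ((last (false,false) s1).2 && (head (false,false) s2).1) + mrg s2.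
Proof.
elim: s1 => [|x s1 IH] //=. rewrite IH.
case: s1 IH => [|y s1] /= _; lia.
Qed.

Section G.
Variable T : finType.
Implicit Types P acc : seq {set T}.

Definition ends P := (#|first_bag P| <= 2, #|last_bag P| <= 2).
Definition good P := (0 < size P) && ((size P == 1) ==> (2 < #|first_bag P|)).

Lemma head_rev (x0 : {set T}) s : head x0 (rev s) = last x0 s.
Proof. by case/lastP: s => [|s y] //; rewrite rev_rcons last_rcons. Qed.
Lemma last_rev (x0 : {set T}) s : last x0 (rev s) = head x0 s.
Proof. by case: s => [|y s] //; rewrite rev_cons last_rcons. Qed.

Lemma ends_orient b P : ends (orient b P) = if b then ((ends P).2, (ends P).1) else ends P.
Proof. by case: b; rewrite /ends /orient /first_bag /last_bag ?head_rev ?last_rev. Qed.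

Lemma good_orient b P : good P -> good (orient b P).
Proof.
case: b => //; rewrite /good /orient size_rev.
by case: P => [|x [|y s]].
Qed.

Lemma pconcat_spec acc P : 0 < size acc -> good P ->
  last_bag (pconcat acc P) = last_bag P /\
  size (pconcat acc P) + ((ends acc).2 && (ends P).1) = size acc + size P.
Proof.
case: acc => [//|x s1]; case: P => [//|y s2] _.
rewrite /good /ends /first_bag /last_bag /pconcat /=.
case: ifP => [/andP [H1 H2]|Hn].
- case: s2 => [|z s2] /=; first by rewrite ltnNge H2.
  move=> _; rewrite last_cat /= size_cat size_belast /=; split=> //.
  move: H1 H2; case: (#|last x s1| <= 2); case: (#|y| <= 2) => /= *; lia.
- move=> _; rewrite -cat_cons last_cat /= size_cat /=; split=> //; lia.
Qed.

Lemma fold_spec Ps acc : 0 < size acc -> all good Ps ->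
  size (foldl (@pconcat T) acc Ps) + mrg (map ends (acc :: Ps)) =
  size acc + sumn (map size Ps).
Proof.
elim: Ps acc => [|P Ps IH] acc Hacc /=; first by rewrite andbF !addn0.
case/andP=> HP HPs.
have [Hl Hs] := pconcat_spec Hacc HP.
have HP0 : 0 < size P by case/andP: HP.
have Hacc' : 0 < size (pconcat acc P) by move: Hs; case: (_ && _) => /= Hs; lia.
have := IH _ Hacc' HPs; rewrite /= /ends /= Hl => IH'.
move: Hs IH'; rewrite /ends /=; lia.
Qed.

Lemma all_spec Ps : all good Ps ->
  size (pconcat_all Ps) + mrg (map ends Ps) = sumn (map size Ps).
Proof.
case: Ps => [|P Ps] //= /andP [HP HPs].
have HP0 : 0 < size P by case/andP: HP.
by have := fold_spec HP0 HPs.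
Qed.

End G.

Lemma mrg_nseqTT a : mrg (nseq a (true,true)) = a.-1.
Proof. elim: a => [|a IH] //=; case: a IH => [|a] //= ->; lia. Qed.

Lemma mrg_nseqFF a : mrg (nseq a (false,false)) = 0.
Proof. elim: a => [|a IH] //=; case: a IH => [|a] //= ->. Qed.

Lemma last_nseq_TT a : (last (false,false) (nseq a (true,true))).2 = (0 < a).
Proof. by case: a => [|a] //=; elim: a. Qed.

Fixpoint alt (p : bool) n : seq (bool*bool) :=
  if n is n'.+1 then (p, ~~p) :: alt (~~p) n' else [::].

Lemma mrg_alt n p : mrg (alt p n) = if p then n.-1./2 else n./2.
Proof.
elim: n p => [|n IH] p //=; first by case: p.
rewrite IH; case: p => /=; first by [].
case: n {IH} => [|n] //=.
Qed.

Lemma alt_iota m n : [seq (odd k, ~~ odd k) | k <- iota m n] = alt (odd m) n.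
Proof. by elim: n m => [|n IH] m //=; rewrite IH /=; case: (odd m). Qed.

Lemma index_map (X : eqType) (Y : Type) (s : seq X) (g : nat -> Y) : uniq s ->
  [seq g (index x s) | x <- s] = [seq g k | k <- iota 0 (size s)].
Proof.
elim: s g => [|x s IH] g //= /andP [xs us]; rewrite eqxx /=; congr (_ :: _).
have -> : iota 1 (size s) = map (addn 1) (iota 0 (size s)) by rewrite -iotaDl.
rewrite -map_comp -(IH (fun k => g k.+1) us).
apply/eq_in_map => y ys /=; case: eqP => [Exy|] //.
by rewrite Exy ys in xs.
Qed.

Lemma map_const_in (X : eqType) (Y : Type) (s : seq X) (g : X -> Y) y :
  (forall x, x \in s -> g x = y) -> map g s = nseq (size s) y.
Proof.
elim: s => [|x s IH] //= H; rewrite H ?mem_head // IH // => z zs.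
by apply: H; rewrite inE zs orbT.
Qed.

Lemma perm_of_list n (r : seq 'I_n) : perm_eq r (enum 'I_n) ->
  exists pi : 'S_n, map pi (enum 'I_n) = r.
Proof.
move=> pr.
have sr : size r = n by rewrite (perm_size pr) size_enum_ord.
have ur : uniq r by rewrite (perm_uniq pr) enum_uniq.
have ginj : injective (fun j : 'I_n => nth j r j).
  move=> j k /= E.
  have jr : j < size r by rewrite sr.
  have kr : k < size r by rewrite sr.
  apply: val_inj; apply/eqP; rewrite -(nth_uniq j jr kr ur).
  by rewrite E (set_nth_default j k kr).
exists (perm ginj).
case: r pr sr ur ginj => [|x0 r'] pr sr ur ginj.
  by rewrite /= in sr; subst n; apply: size0nil; rewrite size_map size_enum_ord.
rewrite -{2}(mkseq_nth x0 (x0 :: r')) sr /mkseq -val_enum_ord -map_comp.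
apply: eq_map => j /=; rewrite permE /=.
by apply: set_nth_default; rewrite sr.
Qed.

Lemma good_Q (T : finType) (e : rel T) V (P : seq {set T}) :
  is_path_decomp e V P -> chunk_graph e V -> good P.
Proof.
case=> _ cov _ _ [x [/andP [xV bx] _]].
have V3 : 3 <= #|V|.
  apply: (leq_trans bx); apply: subset_leq_card; apply/subsetP => y.
  by rewrite inE => /andP [].
have [X XP xX] := cov x xV.
apply/andP; split; first by case: P XP {cov}.
case: P XP cov => [//|X0 [|y s]] _ cov //=.
rewrite /first_bag /=; apply: (leq_trans V3); apply: subset_leq_card.
apply/subsetP => y yV; have [Y] := cov y yV.
by rewrite inE => /eqP ->.
Qed.

Lemma sum_perm c (F : 'I_c -> nat) (pi : 'S_c) :
  sumn [seq F (pi j) | j <- enum 'I_c] = \sum_(i < c) F i.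
Proof.
rewrite sumnE big_map big_enum /=.
by rewrite [RHS](reindex_inj (@perm_inj _ pi)); apply: eq_bigl.
Qed.

Lemma count_perm c (p : pred 'I_c) (pi : 'S_c) :
  count (fun j => p (pi j)) (enum 'I_c) = #|[set i | p i]|.
Proof.
rewrite (count_card (fun j => p (pi j))) -(card_preimset [set i | p i] (@perm_inj _ pi)).
by apply: eq_card => j; rewrite !inE.
Qed.
Arguments ends {T}. Arguments good {T}.

Lemma count_ends (T : finType) c (Q : 'I_c -> seq {set T}) (pi : 'S_c)
  (f : {ffun 'I_c -> bool}) (p : pred (bool*bool)) :
  count p (map ends [seq orient (f j) (Q (pi j)) | j <- enum 'I_c]) =
  count (fun j => p (ends (orient (f j) (Q (pi j))))) (enum 'I_c).
Proof. by rewrite -map_comp count_map. Qed.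

Theorem mainTheorem20 (T : finType) (e : rel T) (c : nat)
    (C : 'I_c -> {set T}) (Q : 'I_c -> seq {set T}) :
  simple_graph e ->
  pathwidth_eq e [set: T] 3 ->
  (forall i j, i != j -> [disjoint C i & C j]) ->
  (\bigcup_(i < c) C i = [set: T]) ->
  (forall i, union_of_components e (C i)) ->
  (forall i, chunk_graph e (C i)) ->
  (forall i, is_path_decomp e (C i) (Q i) /\ pd_width (Q i) <= 3) ->
  let a := #|[set i | typeA (Q i)]| in
  let b := #|[set i | typeB (Q i)]| in
  let L (pi : 'S_c) (f : {ffun 'I_c -> bool}) :=
    size (pconcat_all [seq orient (f j) (Q (pi j)) | j <- enum 'I_c]) in
  (exists pi f, L pi f + mu a b = \sum_(i < c) size (Q i)) /\
  (forall pi f, \sum_(i < c) size (Q i) <= L pi f + mu a b).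
Proof.
move=> sg pw disj cov uc ch pd a b L.
have goodQ i : good (Q i) by case: (pd i) => H _; exact: good_Q H (ch i).
have key pi f : L pi f + mrg (map ends [seq orient (f j) (Q (pi j)) | j <- enum 'I_c])
    = \sum_(i<c) size (Q i).
  rewrite /L all_spec; last first.
    by apply/allP => P /mapP [j _ ->]; apply: good_orient.
  rewrite -map_comp -(sum_perm (fun i => size (Q i)) pi); congr sumn.
  by apply: eq_map => j /=; case: (f j); rewrite /orient ?size_rev.
have cnt (pi : 'S_c) (f : {ffun 'I_c -> bool}) : cA (map ends [seq orient (f j) (Q (pi j)) | j <- enum 'I_c]) = a /\
                cB (map ends [seq orient (f j) (Q (pi j)) | j <- enum 'I_c]) = b.
  rewrite /cA /cB !count_ends; split.
  - rewrite /a -(count_perm (fun i => typeA (Q i)) pi).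
    apply: eq_count => j.
    by rewrite ends_orient; case: (f j) => //=; rewrite andbC.
  - rewrite /b -(count_perm (fun i => typeB (Q i)) pi); apply: eq_count => j.
    by rewrite ends_orient; case: (f j) => //=; rewrite addbC.
split; last first.
  move=> pi f; rewrite -(key pi f) leq_add2l.
  have [Ha Hb] := cnt pi f.
  by have := upper (map ends [seq orient (f j) (Q (pi j)) | j <- enum 'I_c]); rewrite Ha Hb.
pose E := enum 'I_c.
pose pA := fun i => typeA (Q i). pose pB := fun i => typeB (Q i).
pose BA := filter pA E. pose R := filter (predC pA) E.
pose BB := filter pB R. pose BC := filter (predC pB) R.
pose r := take 1 BB ++ BA ++ drop 1 BB ++ BC.
pose o := fun i => (ends (Q i)).2 == odd (index i BB).
have pr : perm_eq r E.
  rewrite /r perm_catCA (catA (take 1 BB)) cat_take_drop perm_sym.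
  rewrite -(perm_filterC pA E) perm_cat2l -/R perm_sym.
  by rewrite /BB /BC perm_filterC.
have [pi Hpi] := perm_of_list pr.
exists pi, [ffun j => o (pi j)].
rewrite -(key pi [ffun j => o (pi j)]); congr (_ + _).
have -> : [seq orient ([ffun j => o (pi j)] j) (Q (pi j)) | j <- enum 'I_c] =
    map (fun i => orient (o i) (Q i)) r.
  by rewrite -Hpi; elim: (enum _) => //= j s ->; rewrite ffunE.
rewrite -map_comp /r !map_cat map_take map_drop.
pose h := fun i => ends (orient (o i) (Q i)).
have hBA : map h BA = nseq (size BA) (true,true).
  apply: map_const_in => i; rewrite mem_filter => /andP [Ai _].
  have : (ends (Q i)).1 && (ends (Q i)).2 by [].
  rewrite /h ends_orient; case: (o i); case: (ends (Q i)) => [[] []] //.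
have hBC : map h BC = nseq (size BC) (false,false).
  apply: map_const_in => i; rewrite !mem_filter => /andP [Bi /andP [Ai _]].
  have : ~~ ((ends (Q i)).1 && (ends (Q i)).2) by [].
  have : ~~ ((ends (Q i)).1 (+) (ends (Q i)).2) by [].
  rewrite /h ends_orient; case: (o i); case: (ends (Q i)) => [[] []] //.
have uBB : uniq BB by apply: filter_uniq; apply: filter_uniq; apply: enum_uniq.
have hBB : map h BB = alt false (size BB).
  rewrite -(alt_iota 0) -(index_map _ uBB); apply/eq_in_map => i.
  rewrite mem_filter => /andP [Bi _].
  have : (ends (Q i)).1 (+) (ends (Q i)).2 by [].
  rewrite /h ends_orient /o.
  case: (odd (index i BB)); case: (ends (Q i)) => [[] []] //.
have Ha : size BA = a by rewrite size_filter count_card.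
have Hb : size BB = b.
  rewrite size_filter count_filter /b -count_card; apply: eq_count => i /=.
  rewrite /pB /pA /typeA /typeB.
  by case: (_ <= 2); case: (_ <= 2).
change (mu a b = mrg (take 1 (map h BB) ++ map h BA ++ drop 1 (map h BB) ++ map h BC)).
rewrite hBA hBB hBC Ha Hb; move: (size BC) => k.
clear key cnt Hpi pr Ha Hb; clearbody a b; rewrite /mu; case: b => [|n] /=.
  rewrite mrg_cat mrg_nseqTT mrg_nseqFF; case: k => [|k] /=; rewrite ?andbF; lia.
rewrite take0 drop0 /= mrg_cat mrg_cat mrg_alt mrg_nseqTT mrg_nseqFF last_nseq_TT.
case: a => [|a]; case: n => [|n]; case: k => [|k] /=; rewrite ?andbF ?andbT /=; try lia.
Qed.
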